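(* Let $M$ be a generic metric space and let $r$ be a real number with $0<r<\min\{s(M)/4,\ e(M)/4,\ t(M)/6\}$. Then the sphere $S_r(M)=\{Y\in\mathcal{GH}: d_{GH}(M,Y)=r\}$ is path connected in $\mathcal{GH}$, i.e., any two of its elements can be joined by a continuous curve in $\mathcal{GH}$ whose image lies in $S_r(M)$.
   Context: For a metric space $M$ with $\#M\ge3$: $s(M)=\inf\{|xx'|: x\ne x'\}$; $t(M)=\inf\{|xx'|+|x'x''|-|xx''|: x,x',x''\text{ pairwise distinct}\}$; $S(M)$ is the set of bijections $M\to M$ and $e(M)=\inf\{\operatorname{dis}f: f\in S(M), f\ne\mathrm{id}\}$, where $\operatorname{dis}f=\sup_{x,x'}||xx'|-|f(x)f(x')||$. $M$ is called generic if $\#M\ge3$ and $s(M),t(M),e(M)$ are all positive. $d_{GH}$ is the Gromov–Hausdorff distance (possibly infinite): $d_{GH}(X,Y)$ is the infimum of $r$ such that there exist a metric space $Z$ and subsets $X',Y'\subset Z$ isometric to $X,Y$ with Hausdorff distance $d_H(X',Y')\le r$. $\mathcal{GH}$ is the class (in the sense of von Neumann–Bernays–Gödel set theory) of representatives of isometry classes of all metric spaces; for each cardinal $n$ the subclass $\mathcal{GH}_n$ of spaces of cardinality at most $n$ is a set with topology based on open $d_{GH}$-balls, and a map from a topological space into $\mathcal{GH}$ is continuous if it is continuous into some (equivalently, every) $\mathcal{GH}_n$ containing its image. A continuous curve is a continuous map from a segment $[a,b]$. *)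

(* Defs.v *)
From Stdlib Require Import Reals.
From mathcomp Require Import all_boot all_order all_algebra.
From mathcomp Require Import boolp classical_sets reals constructive_ereal ereal Rstruct.
Set Implicit Arguments. Unset Strict Implicit. Unset Printing Implicit Defensive.
Import Order.TTheory GRing.Theory Num.Theory.
Local Open Scope classical_set_scope.
Local Open Scope ring_scope.

Record MetricSpace := {
  carrier :> Type;
  dist : carrier -> carrier -> R;
  dist_eq0 : forall x y, dist x y = 0 <-> x = y;
  dist_sym : forall x y, dist x y = dist y x;
  dist_tri : forall x y z, dist x z <= dist x y + dist y z
}.

Arguments dist {m} x y.

Local Open Scope ereal_scope.

Definition card_ge3 (M : MetricSpace) : Prop :=
  exists x y z : M, x <> y /\ y <> z /\ x <> z.

Definition s_of (M : MetricSpace) : \bar R :=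
  ereal_inf [set d | exists x x' : M, x <> x' /\ d = (dist x x')%:E].

Definition t_of (M : MetricSpace) : \bar R :=
  ereal_inf [set d | exists x x' x'' : M,
     [/\ x <> x', x' <> x'' & x <> x''] /\
     d = (dist x x' + dist x' x'' - dist x x'')%R%:E].

Definition dis (M : MetricSpace) (f : M -> M) : \bar R :=
  ereal_sup [set d | exists x x' : M,
     d = (`| dist x x' - dist (f x) (f x') |)%R%:E].

Definition e_of (M : MetricSpace) : \bar R :=
  ereal_inf [set d | exists f : M -> M, bijective f /\ f <> id /\ d = dis f].

Definition generic (M : MetricSpace) : Prop :=
  card_ge3 M /\ 0 < s_of M /\ 0 < e_of M /\ 0 < t_of M.

Definition isometric_map (X Z : MetricSpace) (f : X -> Z) : Prop :=
  forall x y : X, dist (f x) (f y) = dist x y.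

(* X and Y are isometric (represent the same element of GH) *)
Definition isometric (X Y : MetricSpace) : Prop :=
  exists f : X -> Y, bijective f /\ isometric_map f.

Definition nbhd_open (Z : MetricSpace) (A : set Z) (r : R) : set Z :=
  [set z | exists2 a, A a & (dist z a < r)%R].

Definition hausdorff (Z : MetricSpace) (A B : set Z) : \bar R :=
  ereal_inf [set d | exists r : R, [/\ (0 < r)%R,
     A `<=` nbhd_open B r, B `<=` nbhd_open A r & d = r%:E]].

Definition dGH (X Y : MetricSpace) : \bar R :=
  ereal_inf [set d | exists r : R, d = r%:E /\
     exists (Z : MetricSpace) (f : X -> Z) (g : Y -> Z),
       [/\ isometric_map f, isometric_map g & hausdorff (range f) (range g) <= r%:E]].

(* gamma : [a,b] -> GH is continuous, for the topology on GH whose base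
   consists of the open balls { Y | d_GH(X,Y) < eps }: the preimage of
   every basic open ball is open in [a,b]. *)
Definition GH_continuous_on (a b : R) (gamma : R -> MetricSpace) : Prop :=
  forall (X : MetricSpace) (eps : R) (t : R),
    (a <= t <= b)%R -> dGH X (gamma t) < eps%:E ->
    exists2 delta : R, (0 < delta)%R &
      forall t' : R, (a <= t' <= b)%R -> (`|t - t'| < delta)%R ->
        dGH X (gamma t') < eps%:E.

(* Main.v *)
Require Import Defs.
From Stdlib Require Import Reals.
From mathcomp Require Import all_boot all_order all_algebra.
From mathcomp Require Import boolp classical_sets reals constructive_ereal ereal Rstruct.
From mathcomp Require Import lra ring.
Import Defs.
Set Implicit Arguments. Unset Strict Implicit. Unset Printing Implicit Defensive.
Import Order.TTheory GRing.Theory Num.Theory.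
Local Open Scope ring_scope.
Local Open Scope classical_set_scope.
Local Bind Scope ring_scope with R.

Definition corr (X W : MetricSpace) (Rl : X -> W -> Prop) :=
  (forall x, exists w, Rl x w) /\ (forall w, exists x, Rl x w).
Definition disle (X W : MetricSpace) (Rl : X -> W -> Prop) (k : R) :=
  forall x x' w w', Rl x w -> Rl x' w' -> `|dist x x' - dist w w'| <= k.
Arguments disle {X W} Rl k%_ring_scope.

Lemma dist_ge0 (X : MetricSpace) (x y : X) : 0 <= dist x y.
Proof.
have h1 := dist_tri x y x. rewrite (dist_sym y x) in h1.
have h2 : dist x x = 0 by apply/dist_eq0.
lra.
Qed.

Lemma dist_xx (X : MetricSpace) (x : X) : dist x x = 0.
Proof. by apply/dist_eq0. Qed.

Lemma disleE (X W : MetricSpace) (Rl : X -> W -> Prop) k x x' w w' :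
  disle Rl k -> Rl x w -> Rl x' w' ->
  dist x x' - dist w w' <= k /\ dist w w' - dist x x' <= k.
Proof.
move=> H h1 h2; have := H _ _ _ _ h1 h2; rewrite ler_norml => /andP[a b].
split; lra.
Qed.

Section Glue.
Variables (X W : MetricSpace) (Rl : X -> W -> Prop) (rho : R).
Hypotheses (hc : corr Rl) (hd : disle Rl (2 * rho)) (hr : 0 < rho).

Definition D0 (x : X) (w : W) : R :=
  inf [set v | exists x' w', Rl x' w' /\ v = dist x x' + dist w' w].

Lemma D0_ne x w : [set v | exists x' w', Rl x' w' /\ v = dist x x' + dist w' w] !=set0.
Proof.
have [w' Hw'] := hc.1 x.
by exists (dist x x + dist w' w); exists x, w'.
Qed.

Lemma D0_le x w x' w' : Rl x' w' -> D0 x w <= dist x x' + dist w' w.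
Proof.
move=> H; apply: ge_inf; last by exists x', w'.
exists 0 => v [a [b [_ ->]]].
have := dist_ge0 x a; have := dist_ge0 b w; lra.
Qed.

Lemma D0_ge0 x w : 0 <= D0 x w.
Proof.
apply: lb_le_inf; first exact: D0_ne.
move=> v [a [b [_ ->]]]; have := dist_ge0 x a; have := dist_ge0 b w; lra.
Qed.

Lemma T1 x1 x2 w : D0 x1 w <= dist x1 x2 + D0 x2 w.
Proof.
suff : D0 x1 w - dist x1 x2 <= D0 x2 w by lra.
apply: lb_le_inf; first exact: D0_ne.
move=> v [a [b [Hab ->]]].
have := D0_le x1 w Hab; have := dist_tri x1 x2 a; lra.
Qed.

Lemma T2 x w1 w2 : D0 x w1 <= D0 x w2 + dist w2 w1.
Proof.
suff : D0 x w1 - dist w2 w1 <= D0 x w2 by lra.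
apply: lb_le_inf; first exact: D0_ne.
move=> v [a [b [Hab ->]]].
have := D0_le x w1 Hab; have := dist_tri b w2 w1; lra.
Qed.

Lemma T3 x1 x2 w : dist x1 x2 <= D0 x1 w + D0 x2 w + 2 * rho.
Proof.
suff : dist x1 x2 - D0 x2 w - 2 * rho <= D0 x1 w by lra.
apply: lb_le_inf; first exact: D0_ne.
move=> v [a [b [Hab ->]]].
suff : dist x1 x2 - dist x1 a - dist b w - 2 * rho <= D0 x2 w by lra.
apply: lb_le_inf; first exact: D0_ne.
move=> v' [a' [b' [Hab' ->]]].
have [h1 _] := disleE hd Hab Hab'.
have := dist_tri x1 a x2; have := dist_tri a a' x2;
have := dist_tri b w b'; rewrite (dist_sym a' x2) (dist_sym b' w); lra.
Qed.

Lemma T4 x w1 w2 : dist w1 w2 <= D0 x w1 + D0 x w2 + 2 * rho.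
Proof.
suff : dist w1 w2 - D0 x w2 - 2 * rho <= D0 x w1 by lra.
apply: lb_le_inf; first exact: D0_ne.
move=> v [a [b [Hab ->]]].
suff : dist w1 w2 - dist x a - dist b w1 - 2 * rho <= D0 x w2 by lra.
apply: lb_le_inf; first exact: D0_ne.
move=> v' [a' [b' [Hab' ->]]].
have [_ h1] := disleE hd Hab Hab'.
have := dist_tri w1 b w2; have := dist_tri b b' w2;
have := dist_tri a x a'; rewrite (dist_sym b w1) (dist_sym a x); lra.
Qed.

Definition zd (a b : X + W) : R :=
  match a, b with
  | inl x, inl x' => dist x x'
  | inr w, inr w' => dist w w'
  | inl x, inr w => D0 x w + rho
  | inr w, inl x => D0 x w + rho
  end.

Lemma zd_eq0 a b : zd a b = 0 <-> a = b.
Proof.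
case: a => [x|w]; case: b => [x'|w'] /=.
- by split => [/dist_eq0 -> //| [->]]; apply/dist_eq0.
- split => [h|h]; last discriminate.
  have : 0 < D0 x w' + rho by move: hr; have := D0_ge0 x w'; lra.
  by rewrite h ltxx.
- split => [h|h]; last discriminate.
  have : 0 < D0 x' w + rho by move: hr; have := D0_ge0 x' w; lra.
  by rewrite h ltxx.
- by split => [/dist_eq0 -> //| [->]]; apply/dist_eq0.
Qed.

Lemma zd_sym a b : zd a b = zd b a.
Proof. by case: a => [x|w]; case: b => [x'|w'] //=; rewrite dist_sym. Qed.

Lemma zd_tri a b c : zd a c <= zd a b + zd b c.
Proof.
case: a => [x|w]; case: b => [x'|w']; case: c => [x''|w''] /=.
- exact: dist_tri.
- have := T1 x x' w''; lra.
- have := T3 x x'' w'; lra.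
- have := T2 x w'' w'; rewrite dist_sym; lra.
- have := T1 x'' x' w; rewrite dist_sym; lra.
- have := T4 x' w w''; lra.
- have := T2 x'' w w'; rewrite dist_sym; lra.
- exact: dist_tri.
Qed.

Definition Zsp : MetricSpace :=
  {| carrier := X + W; dist := zd; dist_eq0 := zd_eq0;
     dist_sym := zd_sym; dist_tri := zd_tri |}.

Lemma L1 : (dGH X W <= rho%:E)%E.
Proof.
apply: ereal_inf_lbound; exists rho; split => //.
exists Zsp, inl, inr; split => //.
apply/lee_addgt0Pr => e he.
apply: ereal_inf_lbound; exists (rho + e); split; [move: hr; lra| | |by []].
- move=> z [x _ <-]; have [w Hw] := hc.1 x.
  exists (inr w); first by exists w.
  rewrite /= /zd; have := D0_le x w Hw; rewrite !dist_xx; lra.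
- move=> z [w _ <-]; have [x Hx] := hc.2 w.
  exists (inl x); first by exists x.
  rewrite /= /zd; have := D0_le x w Hx; rewrite !dist_xx; lra.
Qed.
End Glue.


Lemma disle_mono (X W : MetricSpace) (Rl : X -> W -> Prop) k k' :
  k <= k' -> disle Rl k -> disle Rl k'.
Proof. move=> hk H x x' w w' h1 h2; exact: le_trans (H _ _ _ _ h1 h2) hk. Qed.

Lemma L2 (X W : MetricSpace) (eps : R) :
  (dGH X W < eps%:E)%E ->
  exists h, [/\ 0 < h, h < eps & exists Rl : X -> W -> Prop, corr Rl /\ disle Rl (2 * h)].
Proof.
move=> /ereal_inf_lt [y [r0 [-> [Z [f [g [hf hg hH]]]]]]].
rewrite lte_fin => r0e.
have : (hausdorff (range f) (range g) < ((r0 + eps) / 2)%:E)%E.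
  apply: le_lt_trans hH _; rewrite lte_fin; lra.
move=> /ereal_inf_lt [y' [r1 [r1p sub1 sub2 ->]]]; rewrite lte_fin => r1h.
exists ((r0 + eps) / 2); split; [lra|lra|].
exists (fun x w => dist (f x) (g w) < (r0 + eps) / 2); split; first split.
- move=> x; have [a [w _ <-] da] := sub1 (f x) (ex_intro2 _ _ x I erefl).
  by exists w; lra.
- move=> w; have [a [x _ <-] da] := sub2 (g w) (ex_intro2 _ _ w I erefl).
  by exists x; rewrite dist_sym; lra.
- move=> x x' w w' h1 h2; rewrite -hf -hg ler_norml.
  have := dist_tri (f x) (g w) (f x'); have := dist_tri (g w) (g w') (f x');
  have := dist_tri (g w) (f x) (g w'); have := dist_tri (f x) (f x') (g w');
  rewrite (dist_sym (g w') (f x')) (dist_sym (g w) (f x)) => *.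
  apply/andP; split; lra.
Qed.

Definition compR (X Y W : MetricSpace) (R1 : X -> Y -> Prop) (R2 : Y -> W -> Prop) :=
  fun x w => exists y, R1 x y /\ R2 y w.

Lemma compR_corr (X Y W : MetricSpace) (R1 : X -> Y -> Prop) (R2 : Y -> W -> Prop) :
  corr R1 -> corr R2 -> corr (compR R1 R2).
Proof.
move=> [a1 b1] [a2 b2]; split.
- move=> x; have [y hy] := a1 x; have [w hw] := a2 y; by exists w, y.
- move=> w; have [y hy] := b2 w; have [x hx] := b1 y; by exists x, y.
Qed.

Lemma compR_dis (X Y W : MetricSpace) (R1 : X -> Y -> Prop) (R2 : Y -> W -> Prop) k1 k2 :
  disle R1 k1 -> disle R2 k2 -> disle (compR R1 R2) (k1 + k2).
Proof.
move=> d1 d2 x x' w w' [y [h1 h2]] [y' [h1' h2']].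
have := d1 _ _ _ _ h1 h1'; have := d2 _ _ _ _ h2 h2'.
rewrite !ler_norml => /andP[a b] /andP[c d]; apply/andP; split; lra.
Qed.

Lemma contC (a b : R) (g : R -> MetricSpace) (K : R) : 0 < K ->
  (forall t t', a <= t <= b -> a <= t' <= b ->
     exists Rl : g t -> g t' -> Prop, corr Rl /\ disle Rl (K * `|t - t'|)) ->
  GH_continuous_on a b g.
Proof.
move=> HK Hg X eps t ht hd.
have [h [h0 heps [R1 [c1 d1]]]] := L2 hd.
exists ((eps - h) / K); first by apply: divr_gt0 => //; lra.
move=> t' ht' dt.
have [R2 [c2 d2]] := Hg t t' ht ht'.
have hK : K * `|t - t'| < eps - h.
  have : K * `|t - t'| < K * ((eps - h) / K) by rewrite ltr_pM2l.
  by rewrite [K * (_ / _)]mulrC divfK // gt_eqF.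
apply: (@le_lt_trans _ _ ((h + eps) / 2)%:E); last by rewrite lte_fin; lra.
apply: L1; [exact: compR_corr c1 c2| |lra].
apply: disle_mono (compR_dis d1 d2); lra.
Qed.


Definition lab (M W : MetricSpace) (c : W -> M) : M -> W -> Prop := fun x w => x = c w.

Lemma sbound (M : MetricSpace) (k : R) : (k%:E < s_of M)%E ->
  forall x x' : M, dist x x' <= k -> x = x'.
Proof.
move=> h x x' hd; case: (pselect (x = x')) => // ne; exfalso.
have : (s_of M <= (dist x x')%:E)%E by apply: ereal_inf_lbound; exists x, x'.
move=> h2; have := lt_le_trans h h2; rewrite lte_fin; move: hd; lra.
Qed.

Lemma close_lt (M : MetricSpace) (k k' : R) : k' <= k -> (k%:E < s_of M)%E -> (k'%:E < s_of M)%E.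
Proof. move=> hk; apply: le_lt_trans; by rewrite lee_fin. Qed.

Lemma rigid (M W : MetricSpace) (c : W -> M) (rho h : R) :
  (forall x, exists w, c w = x) ->
  disle (lab c) (2 * rho) ->
  ((2 * h + 2 * rho)%:E < s_of M)%E -> ((2 * h + 2 * rho)%:E < e_of M)%E ->
  forall Rl : M -> W -> Prop, corr Rl -> disle Rl (2 * h) ->
  disle (lab c) (2 * h).
Proof.
move=> surj hl hs he Rl [hc1 hc2] hd.
have close := sbound hs.
have [wx Hwx] := choice surj.
have [f Hf] := choice (fun x => hc2 (wx x)).
have [v Hv] := choice hc1.
have labE : forall w w', dist (c w) (c w') - dist w w' <= 2 * rho /\
                         dist w w' - dist (c w) (c w') <= 2 * rho.
  by move=> w w'; apply: (disleE hl).
have gf : forall x, c (v (f x)) = x.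
  move=> x; symmetry; apply: close.
  have [_ h1] := disleE hd (Hf x) (Hv (f x)).
  have [h2 _] := labE (wx x) (v (f x)).
  move: h1 h2; rewrite Hwx dist_xx; lra.
have fg : forall x, f (c (v x)) = x.
  move=> x; symmetry; apply: close.
  have [h1 _] := disleE hd (Hv x) (Hf (c (v x))).
  have [_ h2] := labE (v x) (wx (c (v x))).
  move: h1 h2; rewrite Hwx dist_xx; lra.
have fid : f = id.
  case: (pselect (f = id)) => // fnid; exfalso.
  have h1 : (e_of M <= dis f)%E.
    apply: ereal_inf_lbound; exists f; split; last by split.
    by exists (fun x => c (v x)).
  have h2 : (dis f <= (2 * h + 2 * rho)%:E)%E.
    apply: ge_ereal_sup => _ [x [x' ->]]; rewrite lee_fin.
    have [a1 a2] := labE (wx x) (wx x').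
    have [b1 b2] := disleE hd (Hf x) (Hf x').
    move: a1 a2; rewrite !Hwx => a1 a2.
    rewrite ler_norml; apply/andP; split; lra.
  by have := lt_le_trans he (le_trans h1 h2); rewrite ltxx.
have Rc : forall w, Rl (c w) w.
  move=> w; have [x hx] := hc2 w.
  have e1 : f (c w) = c w by rewrite fid.
  have hf := Hf (c w); rewrite e1 in hf.
  suff -> : c w = x by [].
  apply: close.
  have [h1 _] := disleE hd hx hf.
  have [_ h2] := labE w (wx (c w)).
  move: h1 h2; rewrite Hwx dist_xx; rewrite (dist_sym (c w) x); lra.
move=> x x' w w' -> ->; exact: hd.
Qed.

Lemma lim_le (r E v : R) : 0 < E -> (forall h, r < h -> h < r + E -> v <= 2 * h) -> v <= 2 * r.
Proof.
move=> hE H; rewrite leNgt; apply/negP => hv.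
have [hl|hl] := ltP ((v - 2 * r) / 4) E.
- have := H (r + (v - 2 * r) / 4); lra.
- have := H (r + E / 2); lra.
Qed.

Lemma epsE (k : R) (A B : \bar R) : (k%:E < A)%E -> (k%:E < B)%E ->
  exists e, 0 < e /\ ((k + e)%:E < A)%E /\ ((k + e)%:E < B)%E.
Proof.
have one : forall A : \bar R, (k%:E < A)%E -> exists e, 0 < e /\ ((k + e)%:E < A)%E.
  move=> [a| |] //=.
  - rewrite lte_fin => ha; exists ((a - k) / 2); split; [lra|rewrite lte_fin; lra].
  - by move=> _; exists 1; split => //; rewrite ltry.
move=> /one [e1 [e1p h1]] /one [e2 [e2p h2]].
have [l|l] := leP e1 e2.
- exists e1; split => //; split => //; apply: le_lt_trans h2; rewrite lee_fin; lra.
- exists e2; split => //; split => //; apply: le_lt_trans h1; rewrite lee_fin; lra.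
Qed.

Definition witness (M W : MetricSpace) (c : W -> M) (r : R) :=
  forall d, 0 < d -> d < r -> exists w w', 2 * r - d < `|dist (c w) (c w') - dist w w'|.

Lemma label_of (M Y : MetricSpace) (r : R) : 0 < r ->
  ((4 * r)%:E < s_of M)%E -> ((4 * r)%:E < e_of M)%E -> dGH M Y = r%:E ->
  exists c : Y -> M, [/\ forall x, exists w, c w = x, disle (lab c) (2 * r) & witness c r].
Proof.
move=> r0 hs he hY.
have [e0 [e0p [hs0 he0]]] := epsE hs he.
have [h [h0 hlt [Rl [[hc1 hc2] hd]]]] : exists h, [/\ 0 < h, h < r + e0 / 4 &
   exists Rl : M -> Y -> Prop, corr Rl /\ disle Rl (2 * h)].
  by apply: L2; rewrite hY lte_fin; lra.
have [c Hc] := choice hc2.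
have surj : forall x, exists w, c w = x.
  move=> x; have [y hy] := hc1 x; exists y; symmetry.
  apply: (sbound (k := 2 * h)); first by apply: close_lt hs0; lra.
  have [h1 _] := disleE hd hy (Hc y); move: h1; rewrite dist_xx; lra.
have lab0 : disle (lab c) (2 * h) by move=> x x' w w' -> ->; apply: hd.
have labr : disle (lab c) (2 * r).
  move=> x x' w w' hx hx'; apply: (lim_le (E := e0 / 4)); first lra.
  move=> h' rh' h'e.
  have [h2 [h20 h2lt [R2 [c2 d2]]]] : exists h2, [/\ 0 < h2, h2 < h' &
     exists Rl : M -> Y -> Prop, corr Rl /\ disle Rl (2 * h2)].
    by apply: L2; rewrite hY lte_fin.
  have := rigid surj lab0 _ _ c2 d2.
  have hk : 2 * h2 + 2 * h <= 4 * r + e0 by lra.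
  move=> /(_ (close_lt hk hs0) (le_lt_trans _ he0)) H.
  move: H; rewrite lee_fin => /(_ hk) H; have H' := H _ _ _ _ hx hx'.
  apply: le_trans H' _; lra.
exists c; split => // d d0 dr.
case: (pselect (exists w w', 2 * r - d < `|dist (c w) (c w') - dist w w'|)) => // nex.
exfalso.
have dl : disle (lab c) (2 * (r - d / 2)).
  move=> x x' w w' -> ->; rewrite leNgt; apply/negP => hl; apply: nex.
  exists w, w'; move: hl; lra.
have := L1 (conj (fun x => let: ex_intro w hw := surj x in ex_intro _ w (esym hw))
                 (fun w => ex_intro _ (c w) erefl)) dl.
rewrite hY lee_fin; lra.
Qed.

Lemma sphere (M W : MetricSpace) (r : R) (c : W -> M) : 0 < r ->
  ((4 * r)%:E < s_of M)%E -> ((4 * r)%:E < e_of M)%E ->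
  (forall x, exists w, c w = x) -> disle (lab c) (2 * r) -> witness c r ->
  dGH M W = r%:E.
Proof.
move=> r0 hs he surj hl hw.
have cr : corr (lab c).
  split; first by move=> x; have [w hw'] := surj x; exists w.
  by move=> w; exists (c w).
apply/eqP; rewrite eq_le (L1 cr hl r0) /=.
rewrite leNgt; apply/negP => /L2 [h [h0 hr [R1 [c1 d1]]]].
have hk : 2 * h + 2 * r <= 4 * r by lra.
have := rigid surj hl (close_lt hk hs) (le_lt_trans _ he) c1 d1.
rewrite lee_fin => /(_ hk) H.
have [w [w' hw']] := hw (r - h) ltac:(lra) ltac:(lra).
have := H _ _ w w' erefl erefl; move: hw'; lra.
Qed.


Lemma sgt (M : MetricSpace) (k : R) : (k%:E < s_of M)%E ->
  forall x x' : M, x <> x' -> k < dist x x'.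
Proof.
move=> h x x' ne; rewrite ltNge; apply/negP => hd; apply: ne; exact: sbound h _ _ hd.
Qed.

Lemma tgt (M : MetricSpace) (k : R) : (k%:E < t_of M)%E ->
  forall x x' x'' : M, x <> x' -> x' <> x'' -> x <> x'' ->
  k < dist x x' + dist x' x'' - dist x x''.
Proof.
move=> h x x' x'' n1 n2 n3.
have : (t_of M <= (dist x x' + dist x' x'' - dist x x'')%:E)%E.
  by apply: ereal_inf_lbound; exists x, x', x''.
by move=> h2; have := lt_le_trans h h2; rewrite lte_fin.
Qed.

Section HS.
Variables (M : MetricSpace) (r : R).

Definition av (i : bool) : R := if i then r else - r.

Definition hdist (p q : M * bool) : R :=
  if pselect (p.1 = q.1) then (if p.2 == q.2 then 0 else 2 * r)
  else dist p.1 q.1 + av p.2 + av q.2.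

Lemma hdist_sym p q : hdist p q = hdist q p.
Proof.
rewrite /hdist; case: pselect => h1; case: pselect => h2.
- by rewrite eq_sym.
- by exfalso; apply: h2.
- by exfalso; apply: h1.
- by rewrite dist_sym -addrA [av _ + _]addrC addrA.
Qed.

Lemma hdist_near p q : 0 <= r -> `|hdist p q - dist p.1 q.1| <= 2 * r.
Proof.
move=> r0; rewrite /hdist; case: pselect => h1 /=.
- rewrite h1 dist_xx subr0; case: eqP => _; rewrite ?normr0 ?ger0_norm; lra.
- rewrite ler_norml; apply/andP; rewrite /av; case: p.2; case: q.2; split; lra.
Qed.

Hypotheses (hr : 0 < r) (hs : ((4 * r)%:E < s_of M)%E) (ht : ((6 * r)%:E < t_of M)%E).

Lemma hdist_ge0 p q : 0 <= hdist p q.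
Proof.
rewrite /hdist; case: pselect => h1 /=.
- case: eqP => _; move: hr; lra.
- have := sgt hs h1; rewrite /av; case: p.2; case: q.2; move: hr; lra.
Qed.

Lemma hdist_eq0 p q : hdist p q = 0 <-> p = q.
Proof.
split; last by move=> ->; rewrite /hdist; case: pselect => h /=; [rewrite eqxx | exfalso; apply: h].
move: p q => [x i] [y j]; rewrite /hdist /=; case: pselect => h1 /=.
- case: eqP => [e _|_ h]; first by rewrite h1 e.
  have h0 : 0 < 2 * r by move: hr; lra.
  by move: h0; rewrite h ltxx.
- move=> h; exfalso.
  have h0 : 0 < dist x y + av i + av j.
    by have := sgt hs h1; rewrite /av; clear h; case: i; case: j; move: hr; lra.
  by move: h0; rewrite h ltxx.
Qed.

Lemma hdist_tri p q z : hdist p z <= hdist p q + hdist q z.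
Proof.
move: p q z => [x i] [y j] [z k]; rewrite /hdist /=.
have r0 := hr.
case: pselect => [Exz|Nxz] /=; case: pselect => [Exy|Nxy] /=;
  case: pselect => [Eyz|Nyz] /=.
- by case: i; case: j; case: k => /=; lra.
- by exfalso; apply: Nyz; rewrite -Exy.
- by exfalso; apply: Nxy; rewrite Exz.
- have h1 := sgt hs Nxy; have h2 := sgt hs Nyz.
  by rewrite /av; case: i; case: j; case: k => /=; lra.
- by exfalso; apply: Nxz; rewrite Exy.
- rewrite Exy; have h2 := dist_ge0 y z.
  by rewrite /av; case: i; case: j; case: k => /=; lra.
- rewrite -Eyz; have h2 := dist_ge0 x y.
  by rewrite /av; case: i; case: j; case: k => /=; lra.
- have h1 := tgt ht Nxy Nyz Nxz.
  by rewrite /av; case: i; case: j; case: k => /=; lra.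
Qed.

Definition Hs : MetricSpace :=
  {| carrier := M * bool; dist := hdist; dist_eq0 := hdist_eq0;
     dist_sym := hdist_sym; dist_tri := hdist_tri |}.

End HS.


Lemma wsum0 (u a b : R) : 0 < u -> u < 1 -> 0 <= a -> 0 <= b ->
  (1 - u) * a + u * b = 0 -> a = 0 /\ b = 0.
Proof.
move=> u0 u1 a0 b0 h.
have h1 : (1 - u) * a + u * b <= 0 by rewrite h.
have ha : a <= 0 by nra.
have hb : b <= 0 by nra.
by split; apply/eqP; rewrite eq_le; apply/andP; split.
Qed.

Lemma nle_lt (u : R) : ~ (u <= 0) -> 0 < u.
Proof. by move=> h; rewrite ltNge; apply/negP. Qed.

Definition flipR (A B : MetricSpace) (Rl : A -> B -> Prop) : B -> A -> Prop := fun b a => Rl a b.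

Lemma flipR_ok (A B : MetricSpace) (Rl : A -> B -> Prop) k :
  corr Rl -> disle Rl k -> corr (flipR Rl) /\ disle (flipR Rl) k.
Proof.
move=> [h1 h2] hd; split; first by split.
by move=> b b' a a' e e'; rewrite distrC; apply: hd.
Qed.

Section PATH.
Variables (M : MetricSpace) (r : R) (hr : 0 < r) (hs : ((4 * r)%:E < s_of M)%E)
  (he : ((4 * r)%:E < e_of M)%E) (ht : ((6 * r)%:E < t_of M)%E).
Variables (x0 : M) (Y : MetricSpace) (c : Y -> M).
Hypotheses (hsurj : forall x, exists w, c w = x) (hlab : disle (lab c) (2 * r))
  (hwit : witness c r) (hY : dGH M Y = r%:E).

Definition HS := Hs hr hs ht.

Definition wdist (u : R) (p q : Y * bool) : R :=
  (1 - u) * dist p.1 q.1 + u * hdist r (c p.1, p.2) (c q.1, q.2).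

Section W.
Variables (u : R) (u0 : 0 < u) (u1 : u < 1).

Lemma wd_eq0 p q : wdist u p q = 0 <-> p = q.
Proof.
split; last by move=> ->; rewrite /wdist dist_xx (proj2 (hdist_eq0 hr hs _ _) erefl); ring.
move=> /wsum0 [] //; [exact: dist_ge0|exact: hdist_ge0|].
move=> /dist_eq0 e /(hdist_eq0 hr hs) [_ e2].
by move: p q e e2 => [a i] [b j] /= -> ->.
Qed.

Lemma wd_sym p q : wdist u p q = wdist u q p.
Proof. by rewrite /wdist dist_sym hdist_sym. Qed.

Lemma wd_tri p q z : wdist u p z <= wdist u p q + wdist u q z.
Proof.
rewrite /wdist.
have := dist_tri p.1 q.1 z.1.
have := hdist_tri hr hs ht (c p.1, p.2) (c q.1, q.2) (c z.1, z.2).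
set a := dist _ _; set b := dist _ _; set d := dist _ _.
set x := hdist _ _ _; set y := hdist _ _ _; set w := hdist _ _ _.
move=> h1 h2; move: u0 u1 => p0 p1; nra.
Qed.

Definition Wsp : MetricSpace :=
  {| carrier := Y * bool; dist := wdist u; dist_eq0 := wd_eq0;
     dist_sym := wd_sym; dist_tri := wd_tri |}.
End W.

Definition Pth (u : R) : MetricSpace :=
  match pselect (u <= 0) with
  | left _ => Y
  | right h0 => match pselect (u < 1) with
                | left h1 => Wsp (nle_lt h0) h1
                | right _ => HS
                end
  end.

Definition RepOf (A : MetricSpace) (u : R) :=
  exists Rl : Y * bool -> A -> Prop,
    [/\ forall s, exists a, Rl s a, forall a, exists s, Rl s a &
        forall s s' a a', Rl s a -> Rl s' a' -> dist a a' = wdist u s s'].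

Lemma Rep_Hs : RepOf HS 1.
Proof.
exists (fun s h => (c s.1, s.2) = h); split.
- by move=> s; eexists.
- move=> [x i]; have [w hw] := hsurj x; exists (w, i); by rewrite /= hw.
- move=> s s' a a' <- <-; rewrite /wdist /=; ring.
Qed.

Lemma Rep_Pth u : 0 <= u <= 1 -> RepOf (Pth u) u.
Proof.
move=> /andP[ua ub]; rewrite /Pth; case: pselect => h0 /=.
- have -> : u = 0 by apply/eqP; rewrite eq_le h0 ua.
  exists (fun s y => s.1 = y); split.
  + by move=> s; eexists.
  + by move=> y; exists (y, true).
  + by move=> s s' a a' <- <-; rewrite /wdist; ring.
- case: pselect => h1 /=.
  + exists (fun s s' => s = s'); split.
    * by move=> s; eexists.
    * by move=> s; eexists.
    * by move=> s s' a a' <- <-.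
  + have -> : u = 1 by apply/eqP; rewrite eq_le ub leNgt; apply/negP.
    exact: Rep_Hs.
Qed.

Lemma wd_diff u v s s' : `|wdist u s s' - wdist v s s'| <= 4 * r * `|u - v|.
Proof.
have -> : wdist u s s' - wdist v s s' =
   (u - v) * (hdist r (c s.1, s.2) (c s'.1, s'.2) - dist s.1 s'.1) by rewrite /wdist; ring.
rewrite normrM mulrC ler_wpM2r //.
have := hdist_near (c s.1, s.2) (c s'.1, s'.2) (ltW hr).
have := hlab (x := c s.1) (x' := c s'.1) (w := s.1) (w' := s'.1) erefl erefl => /=.
rewrite !ler_norml => /andP[a b] /andP[d e]; apply/andP; split; lra.
Qed.

Lemma RelRep (A B : MetricSpace) u v : RepOf A u -> RepOf B v ->
  exists Rl : A -> B -> Prop, corr Rl /\ disle Rl (4 * r * `|u - v|).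
Proof.
move=> [R1 [a1 b1 d1]] [R2 [a2 b2 d2]].
exists (fun a b => exists s, R1 s a /\ R2 s b); split; first split.
- move=> a; have [s hs'] := b1 a; have [b hb] := a2 s; by exists b, s.
- move=> b; have [s hs'] := b2 b; have [a ha] := a1 s; by exists a, s.
- move=> a a' b b' [s [h1 h2]] [s' [h1' h2']].
  by rewrite (d1 _ _ _ _ h1 h1') (d2 _ _ _ _ h2 h2'); apply: wd_diff.
Qed.

Lemma sphere_Hs : dGH M HS = r%:E.
Proof.
apply: (sphere (W := HS) (c := fun p : HS => p.1) hr hs he).
- by move=> x; exists (x, true).
- move=> x x' [y i] [y' j] /= -> ->; rewrite distrC; exact: hdist_near (ltW hr).
- move=> d d0 dr; exists (x0, false), (x0, true) => /=.
  rewrite dist_xx /hdist /=; case: pselect => h /=; last by exfalso; apply: h.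
  rewrite sub0r normrN ger0_norm; [lra|move: hr; lra].
Qed.

Lemma sphere_W u (u0 : 0 < u) (u1 : u < 1) : dGH M (Wsp u0 u1) = r%:E.
Proof.
apply: (sphere (W := Wsp u0 u1) (c := fun p : Wsp u0 u1 => c p.1) hr hs he).
- by move=> x; have [w hw] := hsurj x; exists (w, true).
- move=> x x' [y i] [y' j] /= -> ->; rewrite /wdist /=.
  have := hdist_near (c y, i) (c y', j) (ltW hr).
  have := hlab (x := c y) (x' := c y') (w := y) (w' := y') erefl erefl => /=.
  rewrite !ler_norml => /andP[a b] /andP[d e]; apply/andP; split; nra.
- move=> d d0 dr; have [y [y' hyy]] := hwit d0 dr.
  case: (pselect (c y = c y')) => E.
  + exists (y, false), (y', true); rewrite /= /wdist /hdist /=.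
    case: pselect => h /=; last by exfalso; apply: h.
    move: hyy; rewrite E dist_xx !sub0r !normrN (ger0_norm (dist_ge0 _ _)).
    have := dist_ge0 y y'; move=> g0 hyy.
    rewrite ger0_norm; nra.
  + have [hl|hl] := leP 0 (dist (c y) (c y') - dist y y').
    * exists (y, false), (y', false); rewrite /= /wdist /hdist /=.
      case: pselect => h /=; first by exfalso; apply: E.
      move: hyy; rewrite ger0_norm // => hyy.
      rewrite /av ger0_norm; nra.
    * exists (y, true), (y', true); rewrite /= /wdist /hdist /=.
      case: pselect => h /=; first by exfalso; apply: E.
      move: hyy; rewrite ltr0_norm // => hyy.
      rewrite /av ltr0_norm; nra.
Qed.

Lemma sphere_Pth u : 0 <= u <= 1 -> dGH M (Pth u) = r%:E.
Proof.
move=> _; rewrite /Pth; case: pselect => h0 /=; first exact: hY.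
case: pselect => h1 /=; [exact: sphere_W | exact: sphere_Hs].
Qed.
End PATH.

Local Open Scope ereal_scope.

Lemma norm3 (r t t' : R) : (0 < r)%R -> (t <= 1)%R -> (1 <= t')%R ->
  (4 * r * `|t - 1| + 4 * r * `|1 - (2 - t')| <= 4 * r * `|t - t'|)%R.
Proof.
move=> r0 h1 h2.
rewrite (ler0_norm (_ : t - 1 <= 0)%R); last lra.
rewrite (ger0_norm (_ : 0 <= 1 - (2 - t'))%R); last lra.
rewrite (ler0_norm (_ : t - t' <= 0)%R); last lra.
nra.
Qed.

Lemma norm3' (r t t' : R) : (0 < r)%R -> (1 <= t)%R -> (t' <= 1)%R ->
  (4 * r * `|2 - t - 1| + 4 * r * `|1 - t'| <= 4 * r * `|t - t'|)%R.
Proof.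
move=> r0 h1 h2.
rewrite (ler0_norm (_ : 2 - t - 1 <= 0)%R); last lra.
rewrite (ger0_norm (_ : 0 <= 1 - t')%R); last lra.
rewrite (ger0_norm (_ : 0 <= t - t')%R); last lra.
nra.
Qed.

Lemma bij_id (T : Type) : bijective (@id T).
Proof. by exists id. Qed.

Theorem theorem3 (M : MetricSpace) (r : R) :
  generic M -> (0 < r)%R ->
  (4 * r)%R%:E < s_of M -> (4 * r)%R%:E < e_of M -> (6 * r)%R%:E < t_of M ->
  forall Y1 Y2 : MetricSpace,
    dGH M Y1 = r%:E -> dGH M Y2 = r%:E ->
    exists (a b : R) (gamma : R -> MetricSpace),
      [/\ (a <= b)%R, GH_continuous_on a b gamma,
          isometric (gamma a) Y1, isometric (gamma b) Y2 &
          forall t : R, (a <= t <= b)%R -> dGH M (gamma t) = r%:E].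
Proof.
move=> [[x0 _] _] hr hs he ht Y1 Y2 hY1 hY2.
have [c1 [s1 l1 w1]] := label_of hr hs he hY1.
have [c2 [s2 l2 w2]] := label_of hr hs he hY2.
pose g (t : R) : MetricSpace := match pselect (t <= 1)%R with
  | left _ => Pth hr hs ht c1 t | right _ => Pth hr hs ht c2 (2 - t) end.
exists 0%R, 2%R, g; split.
- by [].
- apply: (contC (K := (4 * r)%R)); first lra.
  move=> t t' /andP[t0 t2] /andP[t'0 t'2].
  rewrite /g; case: pselect => e1; case: pselect => e2.
  + have H1 : (0 <= t <= 1)%R by apply/andP.
    have H2 : (0 <= t' <= 1)%R by apply/andP.
    have HH := RelRep hr l1 (Rep_Pth hr hs ht s1 H1) (Rep_Pth hr hs ht s1 H2). exact HH.
  + have e2' : (1 < t')%R by rewrite ltNge; apply/negP.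
    have H1 : (0 <= t <= 1)%R by apply/andP.
    have H2 : (0 <= 2 - t' <= 1)%R by apply/andP; split; lra.
    have [R1 [c1' d1']] := RelRep hr l1 (Rep_Pth hr hs ht s1 H1) (Rep_Hs hr hs ht s1).
    have [R2 [c2' d2']] := RelRep hr l2 (Rep_Hs hr hs ht s2) (Rep_Pth hr hs ht s2 H2).
    exists (compR R1 R2); split; first exact: compR_corr c1' c2'.
    apply: disle_mono (compR_dis d1' d2').
    apply: norm3 => //; lra.
  + have e1' : (1 < t)%R by rewrite ltNge; apply/negP.
    have H1 : (0 <= 2 - t <= 1)%R by apply/andP; split; lra.
    have H2 : (0 <= t' <= 1)%R by apply/andP.
    have [R1 [c1' d1']] := RelRep hr l2 (Rep_Pth hr hs ht s2 H1) (Rep_Hs hr hs ht s2).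
    have [R2 [c2' d2']] := RelRep hr l1 (Rep_Hs hr hs ht s1) (Rep_Pth hr hs ht s1 H2).
    exists (compR R1 R2); split; first exact: compR_corr c1' c2'.
    apply: disle_mono (compR_dis d1' d2').
    apply: norm3' => //; lra.
  + have H1 : (0 <= 2 - t <= 1)%R by apply/andP; split; [|lra]; rewrite subr_ge0.
    have H2 : (0 <= 2 - t' <= 1)%R by apply/andP; split; [|lra]; rewrite subr_ge0.
    have [R1 [c1' d1']] := RelRep hr l2 (Rep_Pth hr hs ht s2 H1) (Rep_Pth hr hs ht s2 H2).
    exists R1; split => //.
    have -> : (t - t' = - ((2 - t) - (2 - t')))%R by ring.
    by rewrite normrN.
- rewrite /g; case: pselect => e; last by exfalso; apply: e; lra.
  rewrite /Pth; case: pselect => e' /=; last by exfalso; apply: e'.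
  by exists id; split; [exact: bij_id|].
- rewrite /g; case: pselect => e; first by exfalso; move: e; lra.
  rewrite /Pth; case: pselect => e' /=; last by exfalso; apply: e'; lra.
  by exists id; split; [exact: bij_id|].
- move=> t /andP[t0 t2]; rewrite /g; case: pselect => e.
  + by apply: (sphere_Pth hr hs he ht x0 s1 l1 w1 hY1); apply/andP.
  + have e' : (1 < t)%R by rewrite ltNge; apply/negP.
    by apply: (sphere_Pth hr hs he ht x0 s2 l2 w2 hY2); apply/andP; split; lra.
Qed.
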